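(* Let $(V,M)$ be a valuation domain with quotient field $L$, $M\neq0$, of the form $V=K+M$ with $K$ a subfield of $V$. Let $D$ be a subring of $K$ with quotient field $F$ and let $R=D+M$. Then: (10) $R$ is a local AV-domain $\iff$ $V$ is a DVR, $D=F$ is a field with $[K:F]<\infty$, and $F\subseteq K$ is a root extension. (11) $R$ is a quasilocal API-domain $\iff$ $V$ is a DVR, $D=F$ is a field, and $F\subseteq K$ is a bounded root extension (i.e. $K/F$ is purely inseparable of bounded exponent or $K$ is finite). (12) $R$ is a local API-domain $\iff$ $V$ is a DVR, $D=F$ is a field with $[K:F]<\infty$, and $F\subseteq K$ is a bounded root extension. (13) $R$ is a RAV-domain $\iff$ $V$ is a rational valuation domain, $D=F$ is a field, and $F\subseteq K$ is a root extension.
   Context: Quasilocal: unique maximal ideal; local: Noetherian and quasilocal. A root extension $R\subseteq S$: each $s\in S$ has some power in $R$; bounded if one exponent works for all $s$. AV-domain: for nonzero $a,b$ there is $n$ with $a^n\mid b^n$ or $b^n\mid a^n$. API-domain: for every nonempty subset $\{d_\alpha\}$ of nonzero elements some $n$ makes $(\{d_\alpha^n\})$ principal. DVR: local PID not a field. Rational valuation domain: valuation domain with value group order-isomorphic to a subgroup of $(\mathbb{Q},+)$. For a domain not a field, an almost uniformizing parameter is $a$ such that every nonzero nonunit $y$ satisfies $y^m=ua^n$ for some natural numbers $m,n$ and unit $u$; a RAV-domain is a domain having one. *)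

(* Defs.v *)
(* All rings are subrings of an ambient field L,
   represented as predicates  L -> Prop. *)
From mathcomp Require Import all_boot all_order all_algebra.
Set Implicit Arguments. Unset Strict Implicit. Unset Printing Implicit Defensive.
Import Order.TTheory GRing.Theory Num.Theory.
Local Open Scope ring_scope.

Section Defs.
Variable L : fieldType.
Implicit Types (R S K F I J : L -> Prop).

Definition subring R : Prop :=
  R 0 /\ R 1 /\ (forall x y, R x -> R y -> R (x + y)) /\
  (forall x, R x -> R (- x)) /\ (forall x y, R x -> R y -> R (x * y)).

Definition subfield K : Prop :=
  subring K /\ (forall x, K x -> x != 0 -> K x^-1).

Definition is_ideal R I : Prop :=
  (forall x, I x -> R x) /\ I 0 /\ (forall x y, I x -> I y -> I (x + y)) /\
  (forall r x, R r -> I x -> I (r * x)).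

Definition maximal_ideal R I : Prop :=
  is_ideal R I /\ ~ I 1 /\
  (forall J, is_ideal R J -> ~ J 1 -> (forall x, I x -> J x) -> forall x, J x -> I x).

Definition quasilocal R : Prop :=
  exists M, maximal_ideal R M /\
    forall N, maximal_ideal R N -> forall x, N x <-> M x.

Definition noetherian R : Prop :=
  forall I : nat -> L -> Prop, (forall n, is_ideal R (I n)) ->
    (forall n x, I n x -> I n.+1 x) ->
    exists N, forall n x, (N <= n)%N -> I n x -> I N x.

Definition local R : Prop := noetherian R /\ quasilocal R.

Definition unit_in R x : Prop := R x /\ exists y, R y /\ x * y = 1.

Definition is_field R : Prop := forall x, R x -> x != 0 -> unit_in R x.

Definition dvd_in R a b : Prop := exists c, R c /\ b = a * c.

Definition principal_ideal R I : Prop :=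
  exists a, R a /\ forall x, I x <-> dvd_in R a x.

Definition PID R : Prop := forall I, is_ideal R I -> principal_ideal R I.

Definition DVR R : Prop := local R /\ PID R /\ ~ is_field R.

Definition ideal_gen R S : L -> Prop :=
  fun x => forall I, is_ideal R I -> (forall y, S y -> I y) -> I x.

Definition AV_domain R : Prop :=
  forall a b, R a -> R b -> a != 0 -> b != 0 ->
    exists n, (0 < n)%N /\ (dvd_in R (a ^+ n) (b ^+ n) \/ dvd_in R (b ^+ n) (a ^+ n)).

Definition API_domain R : Prop :=
  forall S, (forall x, S x -> R x /\ x != 0) -> (exists x, S x) ->
    exists n, (0 < n)%N /\
      principal_ideal R (ideal_gen R (fun y => exists d, S d /\ y = d ^+ n)).

Definition almost_unif_param R a : Prop :=
  R a /\ forall y, R y -> y != 0 -> ~ unit_in R y ->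
    exists m n u, (0 < m)%N /\ (0 < n)%N /\ unit_in R u /\ y ^+ m = u * a ^+ n.

Definition RAV_domain R : Prop :=
  ~ is_field R /\ exists a, almost_unif_param R a.

(* V is a valuation domain with quotient field L *)
Definition valuation_domain V : Prop :=
  subring V /\ forall x, x != 0 -> V x \/ V x^-1.

(* value group L^*/U(V) (ordered by  [x] <= [y] iff y/x in V) is
   order-isomorphic to a subgroup of (Q,+): given by v : L^* -> Q *)
Definition rational_valuation_domain V : Prop :=
  valuation_domain V /\
  exists v : L -> rat,
    (forall x y, x != 0 -> y != 0 -> v (x * y) = v x + v y) /\
    (forall x y, x != 0 -> y != 0 -> (v x <= v y <-> V (y / x))).

Definition root_ext F K : Prop :=
  forall s, K s -> exists n, (0 < n)%N /\ F (s ^+ n).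

Definition bounded_root_ext F K : Prop :=
  exists n, (0 < n)%N /\ forall s, K s -> F (s ^+ n).

(* [K:F] < oo : K is spanned over F by finitely many elements *)
Definition finite_degree F K : Prop :=
  exists s : seq L, (forall i, (i < size s)%N -> K s`_i) /\
    forall x, K x -> exists c : seq L, size c = size s /\
      (forall i, (i < size c)%N -> F c`_i) /\
      x = \sum_(i < size s) c`_i * s`_i.

Definition same_set S1 S2 : Prop := forall x, S1 x <-> S2 x.

End Defs.

(* Main.v *)
Require Import Defs.
From mathcomp Require Import all_boot all_order all_algebra.
From mathcomp Require Import ring.
From Stdlib Require Import Classical ClassicalEpsilon.
Import Order.TTheory GRing.Theory Num.Theory.
Set Implicit Arguments. Unset Strict Implicit. Unset Printing Implicit Defensive.
Local Open Scope ring_scope.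

Section Main.
Variables (L : fieldType) (V M K D : L -> Prop).
Hypotheses (hVval : valuation_domain V)
  (hM : maximal_ideal V M)
  (hM0 : exists m, M m /\ m != 0)
  (hK : subfield K) (hKV : forall x, K x -> V x)
  (hVKM : forall v, V v -> exists k m, K k /\ M m /\ v = k + m)
  (hD : subring D) (hDK : forall x, D x -> K x).

Implicit Types (S : L -> Prop).
Definition Rr := fun x => exists d m, D d /\ M m /\ x = d + m.
Definition Fq := fun x => exists a b, D a /\ D b /\ b != 0 /\ x = a / b.

Lemma sr0 {S} : subring S -> S 0. Proof. by case. Qed.
Lemma sr1 {S} : subring S -> S 1. Proof. by case=> _ []. Qed.
Lemma srD {S} : subring S -> forall x y, S x -> S y -> S (x + y).
Proof. by case=> _ [] _ []. Qed.
Lemma srN {S} : subring S -> forall x, S x -> S (- x).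
Proof. by case=> _ [] _ [] _ []. Qed.
Lemma srM {S} : subring S -> forall x y, S x -> S y -> S (x * y).
Proof. by case=> _ [] _ [] _ []. Qed.
Lemma srB {S} : subring S -> forall x y, S x -> S y -> S (x - y).
Proof. by move=> h x y hx hy; apply: srD => //; apply: srN. Qed.
Lemma srX {S} : subring S -> forall x n, S x -> S (x ^+ n).
Proof.
move=> h x n hx; elim: n => [|n IH]; first by rewrite expr0; apply: sr1.
by rewrite exprS; apply: srM.
Qed.

Lemma hVs : subring V. Proof. by case: hVval. Qed.
Lemma hDs : subring D. Proof. by []. Qed.
Lemma hKs : subring K. Proof. by case: hK. Qed.
Lemma Kinv x : K x -> x != 0 -> K x^-1. Proof. by case: hK => _; apply. Qed.
Lemma valV x : x != 0 -> V x \/ V x^-1. Proof. by case: hVval => _; apply. Qed.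

Lemma MV x : M x -> V x. Proof. by case: hM => [[h _] _]; exact: h. Qed.
Lemma M0 : M 0. Proof. by case: hM => [[_ [h _]] _]. Qed.
Lemma MD x y : M x -> M y -> M (x + y).
Proof. by case: hM => [[_ [_ [h _]]] _]; exact: h. Qed.
Lemma MmulV r x : V r -> M x -> M (r * x).
Proof. by case: hM => [[_ [_ [_ h]]] _]; exact: h. Qed.
Lemma MmulVr r x : V r -> M x -> M (x * r).
Proof. by move=> *; rewrite mulrC; apply: MmulV. Qed.
Lemma M1 : ~ M 1. Proof. by case: hM => _ []. Qed.
Lemma MN x : M x -> M (- x).
Proof. by move=> h; rewrite -mulN1r; apply: MmulV => //; apply: (srN hVs (sr1 hVs)). Qed.
Lemma MB x y : M x -> M y -> M (x - y).
Proof. by move=> *; apply: MD => //; apply: MN. Qed.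
Lemma MX x n : M x -> (0 < n)%N -> M (x ^+ n).
Proof.
move=> hx; case: n => // n _; rewrite exprS; apply: MmulVr => //.
by apply: (srX hVs); apply: MV.
Qed.

Lemma V0 : V 0. Proof. exact: (sr0 hVs). Qed.
Lemma V1 : V 1. Proof. exact: (sr1 hVs). Qed.
Lemma VM x y : V x -> V y -> V (x * y). Proof. move=> a b; exact: (srM hVs a b). Qed.
Lemma VD x y : V x -> V y -> V (x + y). Proof. move=> a b; exact: (srD hVs a b). Qed.
Lemma VB x y : V x -> V y -> V (x - y). Proof. move=> a b; exact: (srB hVs a b). Qed.
Lemma VX x n : V x -> V (x ^+ n). Proof. move=> a; exact: (srX hVs n a). Qed.

Lemma ideal_cmp I J : is_ideal V I -> is_ideal V J ->
  (forall x, I x -> J x) \/ (forall x, J x -> I x).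
Proof.
move=> [IV [I0 [ID IM]]] [JV [J0 [JD JM]]].
case: (classic (forall x, I x -> J x)) => [h|h]; first by left.
right.
have [a [Ia nJa]] : exists a, I a /\ ~ J a.
  by apply: NNPP => hn; apply: h => x Ix; apply: NNPP => nJ; apply: hn; exists x.
move=> b Jb.
have a0 : a != 0 by apply/eqP => a0; apply: nJa; rewrite a0.
have [b0|b0] := eqVneq b 0; first by rewrite b0.
have ba0 : b / a != 0 by rewrite mulf_neq0 // invr_eq0.
case: (valV ba0).
  by move=> h'; rewrite -(divfK a0 b); apply: IM.
move=> h'; exfalso; apply: nJa.
have -> : a = (b / a)^-1 * b by rewrite invf_div divfK.
by apply: JM.
Qed.

Lemma M_ideal : is_ideal V M. Proof. by case: hM. Qed.

Lemma proper_subM I : is_ideal V I -> ~ I 1 -> forall x, I x -> M x.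
Proof.
move=> hI nI1; case: (ideal_cmp hI M_ideal) => // h x Ix.
case: hM => _ [_ hmax]; exact: hmax I hI nI1 h x Ix.
Qed.

Lemma unitV x : V x -> ~ M x -> V x^-1 /\ x != 0.
Proof.
move=> Vx nMx.
have x0 : x != 0 by apply/eqP => x0; apply: nMx; rewrite x0; apply: M0.
split=> //; apply: NNPP => nVi; apply: nMx.
pose I := fun y => exists v, V v /\ y = x * v.
have hI : is_ideal V I.
  split; first by move=> y [v [Vv ->]]; apply: VM.
  split; first by exists 0; rewrite mulr0; split=> //; apply: V0.
  split; first by move=> y z [v [Vv ->]] [w [Vw ->]]; exists (v + w); rewrite mulrDr; split=> //; apply: VD.
  by move=> r y Vr [v [Vv ->]]; exists (r * v); split; [apply: VM|rewrite mulrCA].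
apply: (proper_subM hI).
  move=> [v [Vv e]]; apply: nVi; have -> : x^-1 = v by rewrite -(mulKf x0 v) -e mulr1.
  done.
by exists 1; split; [apply: V1|rewrite mulr1].
Qed.

Lemma unit_notM x : x != 0 -> V x^-1 -> ~ M x.
Proof. by move=> x0 Vi Mx; apply: M1; rewrite -(divff x0); apply: MmulVr. Qed.

Lemma notV_invM x : x != 0 -> ~ V x -> M x^-1.
Proof.
move=> x0 nV; case: (valV x0) => // Vi; apply: NNPP => nM.
by apply: nV; rewrite -(invrK x); case: (unitV Vi nM).
Qed.

Lemma KnotM x : K x -> x != 0 -> ~ M x.
Proof. by move=> Kx x0; apply: unit_notM => //; apply: hKV; apply: Kinv. Qed.

Lemma KM0 x : K x -> M x -> x = 0.
Proof. by move=> Kx Mx; apply: NNPP => /eqP h; apply: (KnotM Kx h). Qed.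

Lemma decomp_uniq k1 m1 k2 m2 : K k1 -> M m1 -> K k2 -> M m2 ->
  k1 + m1 = k2 + m2 -> k1 = k2.
Proof.
move=> K1 M1 K2 M2 e; apply/eqP; rewrite -subr_eq0; apply/eqP; apply: KM0.
  exact: (srB hKs K1 K2).
have -> : k1 - k2 = m2 - m1 by rewrite -(addrK m1 k1) e; ring.
exact: MB.
Qed.

Lemma D_R x : D x -> Rr x.
Proof. by move=> h; exists x, 0; split=> //; split; [apply: M0|rewrite addr0]. Qed.
Lemma M_R x : M x -> Rr x.
Proof. by move=> h; exists 0, x; split; [apply: (sr0 hD)|split=> //; rewrite add0r]. Qed.
Lemma R_V x : Rr x -> V x.
Proof. by move=> [d [m [Dd [Mm ->]]]]; apply: VD; [apply: hKV; apply: hDK|apply: MV]. Qed.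
Lemma Rs : subring Rr.
Proof.
split; first exact: D_R (sr0 hD).
split; first exact: D_R (sr1 hD).
split.
  move=> x y [d [m [Dd [Mm ->]]]] [e [n [De [Mn ->]]]].
  exists (d + e), (m + n); split; first exact: srD.
  by split; [apply: MD|ring].
split.
  move=> x [d [m [Dd [Mm ->]]]]; exists (- d), (- m); split; first exact: srN.
  by split; [apply: MN|ring].
move=> x y [d [m [Dd [Mm ->]]]] [e [n [De [Mn ->]]]].
exists (d * e), (d * n + m * e + m * n); split; first exact: srM.
split; last by ring.
have Vd : V d by apply: hKV; apply: hDK.
have Ve : V e by apply: hKV; apply: hDK.
by apply: MD; [apply: MD; [apply: MmulV|apply: MmulVr]|apply: MmulVr => //; apply: MV].
Qed.

Lemma RK_D x : Rr x -> K x -> D x.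
Proof.
move=> [d [m [Dd [Mm e]]]] Kx.
have -> : x = d; last done.
apply: (@decomp_uniq x 0 d m) => //; [exact: M0|exact: hDK|by rewrite addr0].
Qed.

Lemma D_F x : D x -> Fq x.
Proof. by move=> h; exists x, 1; do !split => //; [exact: (sr1 hD)|exact: oner_neq0|rewrite divr1]. Qed.

Lemma F_K x : Fq x -> K x.
Proof.
move=> [a [b [Da [Db [b0 ->]]]]]; apply: (srM hKs (hDK Da) _).
exact: Kinv (hDK Db) b0.
Qed.

Lemma KpowM x k n : V x -> K k -> M (x - k) -> M (x ^+ n - k ^+ n).
Proof.
move=> Vx Kk Mxk; elim: n => [|n IH]; first by rewrite !expr0 subrr; apply: M0.
have -> : x ^+ n.+1 - k ^+ n.+1 = x * (x ^+ n - k ^+ n) + k ^+ n * (x - k).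
  by rewrite !exprS; ring.
apply: MD; apply: MmulV => //; apply: hKV; exact: (srX hKs _ Kk).
Qed.


Definition Dfield := forall d, D d -> d != 0 -> D d^-1.

Lemma Kpart_mul k m k' m' : K k -> M m -> K k' -> M m' ->
  exists m'', M m'' /\ (k + m) * (k' + m') = k * k' + m''.
Proof.
move=> Kk Mm Kk' Mm'; exists (k * m' + m * k' + m * m'); split; last by ring.
have Vk := hKV Kk; have Vk' := hKV Kk'.
apply: MD; [apply: MD; [apply: MmulV|apply: MmulVr]|apply: MmulVr => //; apply: MV] => //.
Qed.

Lemma R_notM_unit x : Dfield -> Rr x -> ~ M x -> unit_in Rr x.
Proof.
move=> hDf Rx nMx; split=> //.
have [Vi x0] := unitV (R_V Rx) nMx.
move: Rx => [d [m [Dd [Mm ex]]]].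
have d0 : d != 0 by apply/eqP => d0; apply: nMx; rewrite ex d0 add0r.
have [k [m' [Kk [Mm' ei]]]] := hVKM Vi.
have [m'' [Mm'' e]] := Kpart_mul (hDK Dd) Mm Kk Mm'.
have dk : d * k = 1.
  apply: (@decomp_uniq (d * k) m'' 1 0) => //.
  - exact: (srM hKs (hDK Dd) Kk).
  - exact: (sr1 hKs).
  - exact: M0.
  by rewrite addr0 -e -ex -ei divff.
have kd : k = d^-1 by rewrite -(mulKf d0 k) dk mulr1.
exists x^-1; split; last by rewrite divff.
by rewrite ei kd; exists d^-1, m'; do !split => //; apply: hDf.
Qed.

Lemma unitR_V u : unit_in Rr u -> V u /\ V u^-1 /\ u != 0.
Proof.
move=> [Ru [y [Ry e]]].
have u0 : u != 0 by apply/eqP => u0; move: e; rewrite u0 mul0r => /eqP; rewrite eq_sym oner_eq0.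
have -> : u^-1 = y by rewrite -(mulKf u0 y) e mulr1.
by split; [apply: R_V|split=> //; apply: R_V].
Qed.

Lemma unitR_notM u : unit_in Rr u -> ~ M u.
Proof. by move=> /unitR_V [_ [Vi u0]]; apply: unit_notM. Qed.

Lemma Dfield_same : same_set D Fq -> Dfield.
Proof.
move=> hs d Dd d0; apply/hs; exists 1, d; do !split => //; first exact: (sr1 hD).
by rewrite div1r.
Qed.

Lemma same_Dfield : Dfield -> same_set D Fq.
Proof.
move=> hf x; split; first exact: D_F.
move=> [a [b [Da [Db [b0 ->]]]]]; apply: (srM hD Da _); exact: hf.
Qed.

Lemma R_proper_subM J : Dfield -> is_ideal Rr J -> ~ J 1 -> forall x, J x -> M x.
Proof.
move=> hf [JR [J0 [JD JM]]] nJ1 x Jx; apply: NNPP => nMx.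
have [_ [y [Ry e]]] := R_notM_unit hf (JR x Jx) nMx.
by apply: nJ1; rewrite -e mulrC; apply: JM.
Qed.

Lemma M_idealR : is_ideal Rr M.
Proof.
split; first exact: M_R.
split; first exact: M0.
split; first exact: MD.
by move=> r x Rr' Mx; apply: MmulV => //; apply: R_V.
Qed.

Lemma M_maxR : Dfield -> maximal_ideal Rr M.
Proof.
move=> hf; split; first exact: M_idealR.
split; first exact: M1.
by move=> J hJ nJ1 _; apply: R_proper_subM.
Qed.

Lemma quasilocalR : Dfield -> quasilocal Rr.
Proof.
move=> hf; exists M; split; first exact: M_maxR.
move=> N [hN [nN1 Nmax]] x; split; first exact: R_proper_subM.
apply: Nmax => //; [exact: M_idealR|exact: M1|exact: R_proper_subM].
Qed.

Lemma chain_mono (P : nat -> L -> Prop) :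
  (forall j x, P j x -> P j.+1 x) -> forall i j x, (i <= j)%N -> P i x -> P j x.
Proof.
move=> h i j x /subnK <-; elim: (j - i)%N => [|k IH] //= Pi.
by rewrite addSn; apply: h; apply: IH.
Qed.

Lemma allprinc_DVR : (forall I, is_ideal V I -> principal_ideal V I) -> DVR V.
Proof.
move=> hp; split; last split => //; last first.
  move=> hf; have [m0 [Mm0 m00]] := hM0.
  have [_ [y [Vy e]]] := hf m0 (MV Mm0) m00.
  by apply: M1; rewrite -e; apply: MmulVr.
split.
  move=> I hI hinc.
  pose U := fun x => exists n, I n x.
  have mono := chain_mono hinc.
  have hU : is_ideal V U.
    split; first by move=> x [n h]; case: (hI n) => h1 _; apply: h1.
    split; first by exists 0%N; case: (hI 0%N) => _ [].
    split.
      move=> x y [n hx] [k hy]; exists (maxn n k).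
      case: (hI (maxn n k)) => _ [_ [h _]]; apply: h.
        by apply: mono hx; apply: leq_maxl.
      by apply: mono hy; apply: leq_maxr.
    by move=> r x Vr [n hx]; exists n; case: (hI n) => _ [_ [_ h]]; apply: h.
  have [a [Va ha]] := hp U hU.
  have [N IaN] : U a by apply/ha; exists 1; split; [exact: V1|rewrite mulr1].
  exists N => n x _ Inx.
  have [c [Vc ->]] : dvd_in V a x by apply/ha; exists n.
  by rewrite mulrC; case: (hI N) => _ [_ [_ h]]; apply: h.
exists M; split; first exact: hM.
move=> N [hN [nN1 Nmax]] x; split; first exact: proper_subM.
apply: Nmax => //; [exact: M_ideal|exact: M1|exact: proper_subM].
Qed.

Lemma noeth_princ : noetherian V -> forall I, is_ideal V I -> principal_ideal V I.
Proof.
move=> hn I hI; apply: NNPP => np.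
have [IV [I0 [ID IM]]] := hI.
have hf : forall a, exists b, I a -> I b /\ ~ dvd_in V a b.
  move=> a; apply: NNPP => hne; apply: np; exists a.
  case: (classic (I a)) => Ia; last first.
    by exfalso; apply: hne; exists 0; move=> Ia'; exfalso; exact: Ia Ia'.
  split; first exact: IV.
  move=> x; split.
    move=> Ix; apply: NNPP => nd; apply: hne; exists x => _; by split.
  by move=> [c [Vc ->]]; rewrite mulrC; apply: IM.
pose f a := proj1_sig (constructive_indefinite_description _ (hf a)).
have hfP a : I a -> I (f a) /\ ~ dvd_in V a (f a).
  by rewrite /f; case: (constructive_indefinite_description _ _).
pose s := fix s n := if n is k.+1 then f (s k) else 0.
have sI n : I (s n) by elim: n => [|n IH] //=; case: (hfP _ IH).
pose J n := fun x => dvd_in V (s n) x.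
have hJ n : is_ideal V (J n).
  split; first by move=> x [c [Vc ->]]; apply: VM => //; apply: IV.
  split; first by exists 0; rewrite mulr0; split => //; apply: V0.
  split; first by move=> x y [c [Vc ->]] [e [Ve ->]]; exists (c + e); rewrite mulrDr; split => //; apply: VD.
  by move=> r x Vr [c [Vc ->]]; exists (r * c); split; [apply: VM|rewrite mulrCA].
have step n : dvd_in V (s n.+1) (s n).
  have [_ nd] := hfP _ (sI n).
  have sn1 : s n.+1 != 0.
    apply/eqP => e; apply: nd; rewrite /= in e *; rewrite e.
    by exists 0; rewrite mulr0; split => //; apply: V0.
  have [sn0|sn0] := eqVneq (s n) 0.
    by rewrite sn0; exists 0; rewrite mulr0; split => //; apply: V0.
  have q0 : s n / s n.+1 != 0 by rewrite mulf_neq0 // invr_eq0.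
  case: (valV q0) => hq; first by exists (s n / s n.+1); split => //; rewrite mulrC divfK.
  exfalso; apply: nd; exists ((s n / s n.+1)^-1); split => //.
  by rewrite /= invf_div mulrC divfK.
have hinc : forall n x, J n x -> J n.+1 x.
  move=> n x [c [Vc ->]]; have [e [Ve ->]] := step n.
  by exists (e * c); split; [apply: VM|rewrite mulrA].
have [N hN] := hn J hJ hinc.
have : J N.+1 (s N.+1) by exists 1; split; [exact: V1|rewrite mulr1].
move/(hN N.+1 _ (leqnSn N)) => hd.
by have [_ nd] := hfP _ (sI N); apply: nd.
Qed.

Lemma noethV_DVR : noetherian V -> DVR V.
Proof. by move=> hn; apply: allprinc_DVR; apply: noeth_princ. Qed.

Lemma noethR_noethV : noetherian Rr -> noetherian V.
Proof.
move=> hn I hI hinc; have [m0 [Mm0 m00]] := hM0.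
pose J n := fun x => exists y, I n y /\ x = m0 * y.
have hJ n : is_ideal Rr (J n).
  have [IV [I0 [ID IM]]] := hI n.
  split; first by move=> x [y [Iy ->]]; apply: M_R; apply: MmulVr => //; apply: IV.
  split; first by exists 0; rewrite mulr0.
  split; first by move=> x z [y [Iy ->]] [w [Iw ->]]; exists (y + w); rewrite mulrDr; split => //; apply: ID.
  by move=> r x Rr' [y [Iy ->]]; exists (r * y); split; [apply: IM => //; apply: R_V|rewrite mulrCA].
have hJinc : forall n x, J n x -> J n.+1 x.
  by move=> n x [y [Iy ->]]; exists y; split => //; apply: hinc.
have [N hN] := hn J hJ hJinc.
exists N => n x le Inx.
have [y [Iy e]] := hN n (m0 * x) le (ex_intro _ x (conj Inx erefl)).
by have -> : x = y by apply: (mulfI m00).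
Qed.

Lemma noethR_Dfield : noetherian Rr -> Dfield.
Proof.
move=> hn d Dd d0; have [m0 [Mm0 m00]] := hM0.
have Vdi : V d^-1 by apply: hKV; apply: Kinv => //; apply: hDK.
pose J n := fun x => exists r, Rr r /\ x = d ^- n * m0 * r.
have dM n : M (d ^- n * m0) by apply: MmulV => //; rewrite -exprVn; apply: VX.
have hJ n : is_ideal Rr (J n).
  split; first by move=> x [r [Rr' ->]]; apply: M_R; apply: MmulVr => //; apply: R_V.
  split; first by exists 0; rewrite mulr0; split => //; exact: (sr0 Rs).
  split; first by move=> x y [r [Rr' ->]] [e [Re ->]]; exists (r + e); rewrite mulrDr; split => //; exact: (srD Rs Rr' Re).
  by move=> r x Rr' [e [Re ->]]; exists (r * e); split; [exact: (srM Rs Rr' Re)|rewrite mulrCA].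
have hinc n x : J n x -> J n.+1 x.
  move=> [r [Rr' ->]]; exists (d * r); split; first exact: (srM Rs (D_R Dd) Rr').
  by rewrite exprSr invfM; field; rewrite d0 expf_neq0.
have [N hN] := hn J hJ hinc.
have : J N.+1 (d ^- N.+1 * m0) by exists 1; split; [exact: (sr1 Rs)|rewrite mulr1].
move/(hN N.+1 _ (leqnSn N)) => [r [Rr' e]].
have er : r = d^-1.
  apply: (@mulfI _ (d ^- N * m0)); first by rewrite mulf_neq0 // invr_eq0 expf_neq0.
  by rewrite -e exprSr invfM; field; rewrite d0 expf_neq0.
rewrite -er; apply: RK_D => //; rewrite er; apply: Kinv => //; exact: hDK.
Qed.


Lemma id_sub S I : is_ideal S I -> forall x, I x -> S x. Proof. by case. Qed.
Lemma id_0 S I : is_ideal S I -> I 0. Proof. by case=> _ []. Qed.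
Lemma id_add S I : is_ideal S I -> forall x y, I x -> I y -> I (x + y).
Proof. by case=> _ [_ []]. Qed.
Lemma id_mul S I : is_ideal S I -> forall r x, S r -> I x -> I (r * x).
Proof. by case=> _ [_ [_ h]]. Qed.
Lemma id_mulr S I : is_ideal S I -> forall r x, S r -> I x -> I (x * r).
Proof. by move=> h r x Sr Ix; rewrite mulrC; apply: (id_mul h). Qed.
Lemma id_neg S I : subring S -> is_ideal S I -> forall x, I x -> I (- x).
Proof.
by move=> hS h x Ix; rewrite -mulN1r; apply: (id_mul h) => //; apply: (srN hS (sr1 hS)).
Qed.
Lemma id_sub2 S I : subring S -> is_ideal S I -> forall x y, I x -> I y -> I (x - y).
Proof. by move=> hS h x y Ix Iy; apply: (id_add h) => //; apply: (id_neg hS h). Qed.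

Lemma Fq0 : Fq 0.
Proof. exists 0, 1; do !split; [exact: (sr0 hD)|exact: (sr1 hD)|exact: oner_neq0|by rewrite mul0r]. Qed.
Lemma Fq1 : Fq 1. Proof. exact: (D_F (sr1 hD)). Qed.
Lemma FqD x y : Fq x -> Fq y -> Fq (x + y).
Proof.
move=> [a [b [Da [Db [b0 ->]]]]] [c [d [Dc [Dd [d0 ->]]]]].
exists (a * d + c * b), (b * d); do !split.
- by apply: (srD hD); apply: (srM hD).
- exact: (srM hD).
- by rewrite mulf_neq0.
by field; rewrite b0 d0.
Qed.
Lemma FqN x : Fq x -> Fq (- x).
Proof.
move=> [a [b [Da [Db [b0 ->]]]]]; exists (- a), b; do !split => //; first exact: (srN hD).
by rewrite mulNr.
Qed.
Lemma FqM x y : Fq x -> Fq y -> Fq (x * y).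
Proof.
move=> [a [b [Da [Db [b0 ->]]]]] [c [d [Dc [Dd [d0 ->]]]]].
exists (a * c), (b * d); do !split; [exact: (srM hD)|exact: (srM hD)|by rewrite mulf_neq0|].
by field; rewrite b0 d0.
Qed.
Lemma FqV x : Fq x -> Fq x^-1.
Proof.
move=> [a [b [Da [Db [b0 ->]]]]]; have [a0|a0] := eqVneq a 0.
  by rewrite a0 mul0r invr0; exact: Fq0.
by exists b, a; do !split => //; rewrite invf_div.
Qed.

Fixpoint spanF (s : seq L) (x : L) : Prop :=
  if s is a :: s' then exists c, Fq c /\ spanF s' (x - c * a) else x = 0.

Lemma span0 s : spanF s 0.
Proof. by elim: s => [|a s IH] //=; exists 0; split; [exact: Fq0|rewrite mul0r subr0]. Qed.
Lemma spanD s x y : spanF s x -> spanF s y -> spanF s (x + y).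
Proof.
elim: s x y => [|a s IH] x y /=; first by move=> -> ->; rewrite addr0.
move=> [c1 [F1 h1]] [c2 [F2 h2]]; exists (c1 + c2); split; first exact: FqD.
have -> : x + y - (c1 + c2) * a = (x - c1 * a) + (y - c2 * a) by ring.
exact: IH.
Qed.
Lemma spanZ s c x : Fq c -> spanF s x -> spanF s (c * x).
Proof.
move=> Fc; elim: s x => [|a s IH] x /=; first by move=> ->; rewrite mulr0.
move=> [c1 [F1 h1]]; exists (c * c1); split; first exact: FqM.
have -> : c * x - c * c1 * a = c * (x - c1 * a) by ring.
exact: IH.
Qed.
Lemma spanB s x y : spanF s x -> spanF s y -> spanF s (x - y).
Proof.
move=> hx hy; apply: spanD => //; rewrite -mulN1r; apply: spanZ => //.
exact: FqN Fq1.
Qed.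
Lemma span_cons s a x : spanF s x -> spanF (a :: s) x.
Proof. by move=> h; exists 0; split; [exact: Fq0|rewrite mul0r subr0]. Qed.
Lemma span_head s a : spanF (a :: s) a.
Proof. by exists 1; split; [exact: Fq1|rewrite mul1r subrr; exact: span0]. Qed.

Definition allK (s : seq L) := forall i, (i < size s)%N -> K s`_i.

Lemma span_K s x : allK s -> spanF s x -> K x.
Proof.
elim: s x => [|a s IH] x hs /=; first by move=> ->; exact: (sr0 hKs).
move=> [c [Fc h]].
have -> : x = (x - c * a) + c * a by ring.
apply: (srD hKs); first by apply: IH => // i hi; exact: (hs i.+1).
by apply: (srM hKs); [exact: F_K|exact: (hs 0%N)].
Qed.

Lemma span_sum s x : spanF s x -> exists c : seq L, size c = size s /\
  (forall i, (i < size c)%N -> Fq c`_i) /\ x = \sum_(i < size s) c`_i * s`_i.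
Proof.
elim: s x => [|a s IH] x /=.
  by move=> ->; exists [::]; split => //; split => //; rewrite big_ord0.
move=> [c0 [F0 h]]; have [c [sc [Fc e]]] := IH _ h.
exists (c0 :: c); split; first by rewrite /= sc.
split; first by case=> [|i] //= hi; apply: Fc.
rewrite big_ord_recl /= -e; ring.
Qed.

Lemma sum_span s c : size c = size s -> (forall i, (i < size c)%N -> Fq c`_i) ->
  spanF s (\sum_(i < size s) c`_i * s`_i).
Proof.
elim: s c => [|a s IH] [|c0 c] //= sc Fc.
  by rewrite big_ord0.
exists c0; split; first exact: (Fc 0%N).
rewrite big_ord_recl /=.
have -> : c0 * a + \sum_(i < size s) c`_i * s`_i - c0 * a =
          \sum_(i < size s) c`_i * s`_i by ring.
apply: IH; first by case: sc.
by move=> i hi; apply: (Fc i.+1).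
Qed.

Definition subsp (W : L -> Prop) := W 0 /\ (forall x y, W x -> W y -> W (x + y)) /\
  (forall c x, Fq c -> W x -> W (c * x)).

Lemma acc_span s : forall W : nat -> L -> Prop, (forall j, subsp (W j)) ->
  (forall j x, W j x -> W j.+1 x) -> (forall j x, W j x -> spanF s x) ->
  exists N, forall j x, (N <= j)%N -> W j x -> W N x.
Proof.
elim: s => [|a s IH] W hW hinc hs.
  exists 0%N => j x _ Wx; have /= -> := hs j x Wx; by case: (hW 0%N).
have mono := chain_mono hinc.
pose W' j x := W j x /\ spanF s x.
have [N1 h1] : exists N1, forall j x, (N1 <= j)%N -> W' j x -> W' N1 x.
  apply: IH.
  - move=> j; have [W0 [WD WZ]] := hW j; split; first by split => //; exact: span0.
    split; first by move=> x y [] ? ? [] ? ?; split; [apply: WD|apply: spanD].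
    by move=> c x Fc [] ? ?; split; [apply: WZ|apply: spanZ].
  - by move=> j x [] ? ?; split => //; apply: hinc.
  - by move=> j x [].
pose P j := exists z, W j z /\ spanF s (z - a).
have [N2 h2] : exists N2, forall j, P j -> P N2.
  case: (classic (exists j, P j)) => [[j Pj]|nP]; first by exists j.
  by exists 0%N => j Pj; exfalso; apply: nP; exists j.
exists (N1 + N2)%N => j x hj Wx.
have le1 : (N1 <= j)%N by apply: leq_trans hj; apply: leq_addr.
have le2 : (N2 <= j)%N by apply: leq_trans hj; apply: leq_addl.
have [c [Fc hx]] := hs j x Wx.
have [c0|c0] := eqVneq c 0.
  move: hx; rewrite c0 mul0r subr0 => hx.
  have [W1 _] := h1 j x le1 (conj Wx hx).
  by apply: mono W1; apply: leq_addr.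
have [W0 [WD WZ]] := hW j.
have Fci : Fq c^-1 by apply: FqV.
have Wy : W j (c^-1 * x) by apply: WZ.
have sy : spanF s (c^-1 * x - a).
  have -> : c^-1 * x - a = c^-1 * (x - c * a) by field.
  exact: spanZ.
have [z [Wz sz]] := h2 j (ex_intro _ _ (conj Wy sy)).
have Wzj : W j z by apply: mono Wz.
have Wyz : W j (c^-1 * x - z).
  apply: WD => //; rewrite -mulN1r; apply: WZ => //; exact: FqN Fq1.
have syz : spanF s (c^-1 * x - z).
  have -> : c^-1 * x - z = (c^-1 * x - a) - (z - a) by ring.
  exact: spanB.
have [W1 _] := h1 j _ le1 (conj Wyz syz).
have [N0' [ND NZ]] := hW (N1 + N2)%N.
have -> : x = c * ((c^-1 * x - z) + z) by field.
apply: NZ => //; apply: ND; first by apply: mono W1; apply: leq_addr.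
by apply: mono Wz; apply: leq_addl.
Qed.


Lemma noethR_finite : noetherian Rr -> finite_degree Fq K.
Proof.
move=> hn; apply: NNPP => nfin; have [m0 [Mm0 m00]] := hM0.
have hg : forall s, exists k, allK s -> K k /\ ~ spanF s k.
  move=> s; apply: NNPP => hne; apply: nfin; exists s.
  have hs : allK s.
    apply: NNPP => nas; apply: hne; exists 0 => h; by exfalso; apply: nas.
  split => // x Kx; apply: span_sum; apply: NNPP => nsp.
  by apply: hne; exists x.
pose g s := proj1_sig (constructive_indefinite_description _ (hg s)).
have hgP s : allK s -> K (g s) /\ ~ spanF s (g s).
  by rewrite /g; case: (constructive_indefinite_description _ _).
pose t := fix t n := if n is k.+1 then g (t k) :: t k else [::].
have tK n : allK (t n).
  elim: n => [|n IH] /=; first by move=> i.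
  by case=> [|i] /= hi; [case: (hgP _ IH)|apply: IH].
pose I n := fun x => exists w m, spanF (t n) w /\ M m /\ x = m0 * (w + m).
have hI n : is_ideal Rr (I n).
  split.
    move=> x [w [m [sw [Mm ->]]]]; apply: M_R; apply: MmulVr => //.
    by apply: VD; [apply: hKV; apply: span_K sw|apply: MV].
  split; first by exists 0, 0; split; [exact: span0|split; [exact: M0|rewrite addr0 mulr0]].
  split.
    move=> x y [w [m [sw [Mm ->]]]] [w' [m' [sw' [Mm' ->]]]].
    exists (w + w'), (m + m'); split; first exact: spanD.
    by split; [apply: MD|ring].
  move=> r x [d [m' [Dd [Mm' ->]]]] [w [m [sw [Mm ->]]]].
  exists (d * w), (d * m + m' * w + m' * m); split; first by apply: spanZ => //; apply: D_F.
  split; last by ring.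
  have Vd : V d by apply: hKV; apply: hDK.
  have Vw : V w by apply: hKV; apply: span_K sw.
  by apply: MD; [apply: MD; [apply: MmulV|apply: MmulVr]|apply: MmulVr => //; apply: MV].
have hinc n x : I n x -> I n.+1 x.
  by move=> [w [m [sw [Mm ->]]]]; exists w, m; split => //; apply: span_cons.
have [N hN] := hn I hI hinc.
have [Kg ng] := hgP _ (tK N).
have : I N.+1 (m0 * g (t N)).
  by exists (g (t N)), 0; split; [exact: span_head|split; [exact: M0|rewrite addr0]].
move/(hN N.+1 _ (leqnSn N)) => [w [m [sw [Mm e]]]].
apply: ng; have -> : g (t N) = w; last done.
have e' : g (t N) = w + m by apply: (mulfI m00).
have Kw : K w by apply: span_K sw.
have Km : K m.
  have -> : m = (w + m) - w by ring.
  by rewrite -e'; apply: (srB hKs).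
by rewrite e' (KM0 Km Mm) addr0.
Qed.

Lemma noethR_of : DVR V -> Dfield -> finite_degree Fq K -> noetherian Rr.
Proof.
move=> [[hnV _] [hPID _]] hf [s [sK hsp]].
have Ksp x : K x -> spanF s x.
  by move=> Kx; have [c [sc [Fc ->]]] := hsp x Kx; apply: sum_span.
move=> I hI hinc; have mono := chain_mono hinc.
pose IV n := fun x => exists r v, I n r /\ V v /\ x = r * v.
have hIV n : is_ideal V (IV n).
  split; first by move=> x [r [v [Ir [Vv ->]]]]; apply: VM => //; apply: R_V; apply: (id_sub (hI n)).
  split; first by exists 0, 0; split; [exact: (id_0 (hI n))|split; [exact: V0|rewrite mulr0]].
  split.
    move=> x y [r1 [v1 [I1 [V1' ->]]]] [r2 [v2 [I2 [V2 ->]]]].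
    have [r10|r10] := eqVneq r1 0; first by rewrite r10 mul0r add0r; exists r2, v2.
    have [r20|r20] := eqVneq r2 0; first by rewrite r20 mul0r addr0; exists r1, v1.
    have q0 : r2 / r1 != 0 by rewrite mulf_neq0 // invr_eq0.
    case: (valV q0) => hq.
      exists r1, (v1 + r2 / r1 * v2); split => //; split; first by apply: VD => //; apply: VM.
      by field.
    exists r2, (r1 / r2 * v1 + v2); split => //; split.
      by apply: VD => //; apply: VM => //; rewrite invf_div in hq.
    by field.
  move=> r x Vr [r' [v [Ir [Vv ->]]]]; exists r', (r * v); split => //; split; first exact: VM.
  by ring.
have hIVinc n x : IV n x -> IV n.+1 x.
  by move=> [r [v [Ir [Vv ->]]]]; exists r, v; split => //; apply: hinc.
have [N0 hN0] := hnV IV hIV hIVinc.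
have [a [Va ha]] := hPID (IV N0) (hIV N0).
have [r0 [v0 [Ir0 [Vv0 ea]]]] : IV N0 a by apply/ha; exists 1; split; [exact: V1|rewrite mulr1].
have hdiv n x : (N0 <= n)%N -> I n x -> exists w, V w /\ x = r0 * w.
  move=> le Ix.
  have : IV N0 x by apply: (hN0 n) => //; exists x, 1; split => //; split; [exact: V1|rewrite mulr1].
  move/ha => [c [Vc ->]]; exists (v0 * c); split; first exact: VM.
  by rewrite ea mulrA.
have hrM n m : (N0 <= n)%N -> M m -> I n (r0 * m).
  move=> le Mm; apply: (mono N0) => //; apply: (id_mulr (hI N0)) => //; exact: M_R.
pose W j := fun k => K k /\ I (N0 + j)%N (r0 * k).
have hW j : subsp (W j).
  split; first by split; [exact: (sr0 hKs)|rewrite mulr0; exact: (id_0 (hI _))].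
  split.
    move=> x y [Kx Ix] [Ky Iy]; split; first exact: (srD hKs).
    by rewrite mulrDr; apply: (id_add (hI _)).
  move=> c x Fc [Kx Ix]; split; first by apply: (srM hKs) => //; apply: F_K.
  rewrite mulrCA; apply: (id_mul (hI _)) => //; apply: D_R.
  by apply/(same_Dfield hf).
have hWinc j x : W j x -> W j.+1 x.
  by move=> [Kx Ix]; split => //; rewrite addnS; apply: hinc.
have [N1 hN1] := @acc_span s W hW hWinc (fun j x h => Ksp x (proj1 h)).
exists (N0 + N1)%N => n y le Iy.
have le0 : (N0 <= n)%N by apply: leq_trans le; apply: leq_addr.
have [w [Vw ey]] := hdiv n y le0 Iy.
have [k [m [Kk [Mm ew]]]] := hVKM Vw.
have Wk : W (n - N0)%N k.
  split => //; rewrite subnKC //.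
  have -> : r0 * k = y - r0 * m by rewrite ey ew; ring.
  apply: (id_sub2 Rs (hI n)) => //; exact: hrM.
have le1 : (N1 <= n - N0)%N by rewrite leq_subRL.
have [_ Ik] := hN1 _ _ le1 Wk.
rewrite ey ew mulrDr; apply: (id_add (hI _)) => //.
by apply: hrM => //; apply: leq_addr.
Qed.

Lemma vtrick r1 r2 v1 v2 : V v1 -> V v2 ->
  exists r v, (r = r1 \/ r = r2) /\ V v /\ r1 * v1 + r2 * v2 = r * v.
Proof.
move=> V1' V2.
have [r10|r10] := eqVneq r1 0; first by exists r2, v2; rewrite r10 mul0r add0r; do !split => //; right.
have [r20|r20] := eqVneq r2 0; first by exists r1, v1; rewrite r20 mul0r addr0; do !split => //; left.
have q0 : r2 / r1 != 0 by rewrite mulf_neq0 // invr_eq0.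
case: (valV q0) => hq.
  exists r1, (v1 + r2 / r1 * v2); split; first by left.
  split; first by apply: VD => //; apply: VM.
  by field.
exists r2, (r1 / r2 * v1 + v2); split; first by right.
split; first by apply: VD => //; apply: VM => //; rewrite invf_div in hq.
by field.
Qed.

Lemma pow_V z n : z != 0 -> (0 < n)%N -> V (z ^+ n) -> V z.
Proof.
move=> z0 n0 Vz; apply: NNPP => nV.
have Mi := notV_invM z0 nV.
apply: M1; have <- : z ^+ n * z^-1 ^+ n = 1 by rewrite -exprMn divff // expr1n.
by apply: MmulV => //; apply: MX.
Qed.

Lemma gen_in T y : T y -> ideal_gen Rr T y.
Proof. by move=> Ty I _ h; apply: h. Qed.

Lemma dvd_ideal g : Rr g -> is_ideal Rr (dvd_in Rr g).
Proof.
move=> Rg; split; first by move=> x [c [Rc ->]]; apply: (srM Rs).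
split; first by exists 0; rewrite mulr0; split => //; exact: (sr0 Rs).
split; first by move=> x y [c [Rc ->]] [e [Re ->]]; exists (c + e); rewrite mulrDr; split => //; apply: (srD Rs).
by move=> r x Rr' [c [Rc ->]]; exists (r * c); split; [apply: (srM Rs)|rewrite mulrCA].
Qed.

Lemma pow_dec w n : Dfield -> V w -> (forall k, K k -> Fq (k ^+ n)) -> Rr (w ^+ n).
Proof.
move=> hf Vw hr; have [k [m [Kk [Mm ew]]]] := hVKM Vw.
exists (k ^+ n), (w ^+ n - k ^+ n); split; first by apply/(same_Dfield hf); apply: hr.
split; last by ring.
by apply: KpowM => //; rewrite ew addrC addKr.
Qed.

Lemma div_pow_R a b : Dfield -> root_ext Fq K -> Rr a -> a != 0 -> V (b / a) ->
  exists n, (0 < n)%N /\ dvd_in Rr (a ^+ n) (b ^+ n).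
Proof.
move=> hf hr Ra a0 Vq; have [k [m [Kk [Mm eq]]]] := hVKM Vq.
have [k0|k0] := eqVneq k 0.
  exists 1%N; split => //; exists (b / a); split; first by rewrite eq k0 add0r; apply: M_R.
  by rewrite !expr1 mulrC divfK.
have [n [n0 Fkn]] := hr k Kk.
exists n; split => //; exists ((b / a) ^+ n); split.
  exists (k ^+ n), ((b / a) ^+ n - k ^+ n); split; first exact/(same_Dfield hf).
  split; last by ring.
  by apply: KpowM => //; rewrite eq addrC addKr.
by rewrite -exprMn mulrC divfK.
Qed.

Lemma AV_of : Dfield -> root_ext Fq K -> AV_domain Rr.
Proof.
move=> hf hr a b Ra Rb a0 b0.
have q0 : b / a != 0 by rewrite mulf_neq0 // invr_eq0.
case: (valV q0) => hq.
  by have [n [n0 h]] := div_pow_R hf hr Ra a0 hq; exists n; split => //; left.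
rewrite invf_div in hq.
by have [n [n0 h]] := div_pow_R hf hr Rb b0 hq; exists n; split => //; right.
Qed.

Lemma AV_root : AV_domain Rr -> Dfield -> root_ext Fq K.
Proof.
move=> hav hf k Kk; have [m0 [Mm0 m00]] := hM0.
have [k0|k0] := eqVneq k 0.
  by exists 1%N; split => //; rewrite k0 expr1; exact: Fq0.
have km0 : k * m0 != 0 by rewrite mulf_neq0.
have Rk : Rr (k * m0) by apply: M_R; apply: MmulV => //; apply: hKV.
have [n [n0 [[c [Rc e]]|[c [Rc e]]]]] := hav _ _ Rk (M_R Mm0) km0 m00.
  have ec : c = k ^- n.
    apply: (@mulfI _ ((k * m0) ^+ n)); first by rewrite expf_neq0.
    by rewrite -e exprMn; field; rewrite expf_neq0.
  exists n; split => //; apply: D_F.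
  have Dc : D c by apply: RK_D => //; rewrite ec; apply: Kinv; [exact: (srX hKs)|exact: expf_neq0].
  rewrite -[k ^+ n]invrK -ec; apply: hf => //.
  by rewrite ec invr_eq0 expf_neq0.
have ec : c = k ^+ n.
  apply: (@mulfI _ (m0 ^+ n)); first by rewrite expf_neq0.
  by rewrite -e exprMn mulrC.
exists n; split => //; apply: D_F; apply: RK_D; first by rewrite -ec.
exact: (srX hKs).
Qed.

Lemma API_of : DVR V -> Dfield -> bounded_root_ext Fq K -> API_domain Rr.
Proof.
move=> [_ [hPID _]] hf [N [N0 hN]] S hS [x0 Sx0].
pose IS x := exists s v, S s /\ V v /\ x = s * v.
have hIS : is_ideal V IS.
  split; first by move=> x [s [v [Ss [Vv ->]]]]; apply: VM => //; apply: R_V; case: (hS s Ss).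
  split; first by exists x0, 0; rewrite mulr0; split => //; split => //; exact: V0.
  split.
    move=> x y [s1 [v1 [S1 [V1' ->]]]] [s2 [v2 [S2 [V2 ->]]]].
    have [r [v [hr [Vv ->]]]] := vtrick s1 s2 V1' V2.
    by case: hr => ->; [exists s1, v|exists s2, v].
  move=> r x Vr [s [v [Ss [Vv ->]]]]; exists s, (r * v); split => //; split; first exact: VM.
  by ring.
have [a [Va ha]] := hPID IS hIS.
have [s0 [v0 [Ss0 [Vv0 ea]]]] : IS a by apply/ha; exists 1; split; [exact: V1|rewrite mulr1].
have hdiv s : S s -> exists w, V w /\ s = s0 * w.
  move=> Ss; have : IS s by exists s, 1; split => //; split; [exact: V1|rewrite mulr1].
  by move/ha => [c [Vc ->]]; exists (v0 * c); split; [apply: VM|rewrite ea mulrA].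
have Rs0 : Rr s0 by case: (hS s0 Ss0).
exists N; split => //; exists (s0 ^+ N); split; first exact: (srX Rs).
move=> x; split.
  apply; first by apply: dvd_ideal; apply: (srX Rs).
  move=> y [d [Sd ->]]; have [w [Vw ->]] := hdiv d Sd.
  exists (w ^+ N); split; last by rewrite exprMn.
  by apply: pow_dec => // k Kk; apply: hN.
move=> [c [Rc ->]] I hI hT; rewrite mulrC; apply: (id_mul hI) => //.
by apply: hT; exists s0.
Qed.

Lemma API_R_Dfield : API_domain Rr -> Dfield.
Proof.
move=> hapi d Dd d0; have [m0 [Mm0 m00]] := hM0.
have Vdi : V d^-1 by apply: hKV; apply: Kinv => //; apply: hDK.
pose S y := exists k : nat, y = d ^- k * m0.
have hS y : S y -> Rr y /\ y != 0.
  move=> [k ->]; split; last by rewrite mulf_neq0 // invr_eq0 expf_neq0.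
  by apply: M_R; apply: MmulV => //; rewrite -exprVn; apply: VX.
have [n [n0 [g [Rg hg]]]] := hapi S hS (ex_intro _ _ (ex_intro _ 0%N erefl)).
pose T x := exists k r, Rr r /\ x = (d ^- k * m0) ^+ n * r.
have hMk k : M ((d ^- k * m0) ^+ n).
  by apply: MX => //; apply: MmulV => //; rewrite -exprVn; apply: VX.
have hT : is_ideal Rr T.
  split; first by move=> x [k [r [Rr' ->]]]; apply: M_R; apply: MmulVr => //; apply: R_V.
  split; first by exists 0%N, 0; rewrite mulr0; split => //; exact: (sr0 Rs).
  split.
    have key k j : (d ^- k * m0) ^+ n = (d ^- (k + j) * m0) ^+ n * (d ^+ j) ^+ n.
      rewrite -exprMn; congr (_ ^+ _); rewrite exprD invfM; field.
      by rewrite !expf_neq0.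
    move=> x y [k1 [r1 [R1 ->]]] [k2 [r2 [R2 ->]]].
    have Rdj j : Rr ((d ^+ j) ^+ n) by apply: D_R; apply: (srX hD); apply: (srX hD).
    case: (leqP k1 k2) => hk.
      exists k2, ((d ^+ (k2 - k1)) ^+ n * r1 + r2); split.
        by apply: (srD Rs) => //; apply: (srM Rs).
      by rewrite (key k1 (k2 - k1)%N) subnKC //; ring.
    exists k1, (r1 + (d ^+ (k1 - k2)) ^+ n * r2); split.
      by apply: (srD Rs) => //; apply: (srM Rs).
    by rewrite (key k2 (k1 - k2)%N) subnKC ?(ltnW hk) //; ring.
  move=> r x Rr' [k [e [Re ->]]]; exists k, (r * e); split; first exact: (srM Rs).
  by ring.
have : T g.
  have hgg : dvd_in Rr g g by exists 1; split; [exact: (sr1 Rs)|rewrite mulr1].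
  apply: (proj2 (hg g) hgg T hT).
  by move=> y [e [[k ->] ->]]; exists k, 1; split; [exact: (sr1 Rs)|rewrite mulr1].
move=> [k [r [Rr' eg]]].
have : dvd_in Rr g ((d ^- k.+1 * m0) ^+ n).
  by apply/hg; apply: gen_in; exists (d ^- k.+1 * m0); split => //; exists k.+1.
move=> [c [Rc e]].
have e2 : (d^-1) ^+ n = r * c.
  apply: (@mulfI _ ((d ^- k * m0) ^+ n)).
    by rewrite expf_neq0 // mulf_neq0 // invr_eq0 expf_neq0.
  rewrite mulrA -eg -e -exprMn; congr (_ ^+ _).
  by rewrite exprSr invfM; field; rewrite d0 expf_neq0.
have Ddn : D ((d^-1) ^+ n).
  apply: RK_D; first by rewrite e2; apply: (srM Rs).
  by apply: (srX hKs); apply: Kinv => //; apply: hDK.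
have -> : d^-1 = d ^+ n.-1 * (d^-1) ^+ n.
  rewrite exprVn -{2}(prednK n0) exprS; field.
  by rewrite d0 expf_neq0.
by apply: (srM hD) => //; apply: (srX hD).
Qed.

Lemma API_R_bounded : API_domain Rr -> Dfield -> bounded_root_ext Fq K.
Proof.
move=> hapi hf; have [m0 [Mm0 m00]] := hM0.
pose S y := exists k, K k /\ k != 0 /\ y = k * m0.
have hS y : S y -> Rr y /\ y != 0.
  move=> [k [Kk [k0 ->]]]; split; last by rewrite mulf_neq0.
  by apply: M_R; apply: MmulV => //; apply: hKV.
have S1 : S m0 by exists 1; split; [exact: (sr1 hKs)|split; [exact: oner_neq0|rewrite mul1r]].
have [n [n0 [g [Rg hg]]]] := hapi S hS (ex_intro _ _ S1).
pose T x := exists v, V v /\ x = m0 ^+ n * v.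
have hT : is_ideal Rr T.
  split; first by move=> x [v [Vv ->]]; apply: M_R; apply: MmulVr => //; apply: MX.
  split; first by exists 0; rewrite mulr0; split => //; exact: V0.
  split; first by move=> x y [v [Vv ->]] [w [Vw ->]]; exists (v + w); rewrite mulrDr; split => //; apply: VD.
  move=> r x Rr' [v [Vv ->]]; exists (r * v); split; last by ring.
  by apply: VM => //; apply: R_V.
have : T g.
  have hgg : dvd_in Rr g g by exists 1; split; [exact: (sr1 Rs)|rewrite mulr1].
  apply: (proj2 (hg g) hgg T hT).
  move=> y [e [[k [Kk [k0 ->]]] ->]]; exists (k ^+ n); split; last by rewrite exprMn mulrC.
  by apply: VX; apply: hKV.
move=> [v [Vv eg]]; have [c [m [Kc [Mm ev]]]] := hVKM Vv.
have hgen k : K k -> k != 0 -> exists e, Rr e /\ k ^+ n = v * e.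
  move=> Kk k0.
  have : dvd_in Rr g ((k * m0) ^+ n).
    by apply/hg; apply: gen_in; exists (k * m0); split => //; exists k.
  move=> [e [Re ee]]; exists e; split => //.
  apply: (@mulfI _ (m0 ^+ n)); first by rewrite expf_neq0.
  by rewrite mulrA -eg -ee exprMn mulrC.
have Kpart k e : K k -> Rr e -> k = v * e -> exists d, D d /\ k = c * d.
  move=> Kk [d [m' [Dd [Mm' ->]]]] ek; exists d; split => //.
  have [m'' [Mm'' e']] := Kpart_mul Kc Mm (hDK Dd) Mm'.
  apply: (@decomp_uniq k 0 (c * d) m'') => //; first exact: M0.
  - by apply: (srM hKs) => //; apply: hDK.
  by rewrite addr0 -e' -ev.
have [e1 [Re1 e1e]] := hgen 1 (sr1 hKs) (oner_neq0 _).
have [d1 [Dd1 ed1]] := Kpart 1 e1 (sr1 hKs) Re1 (etrans (esym (expr1n _ _)) e1e).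
have d10 : d1 != 0 by apply/eqP => d10; move: ed1; rewrite d10 mulr0 => /eqP; rewrite oner_eq0.
have ec : c = d1^-1 by rewrite -(mulfK d10 c) -ed1 mul1r.
exists n; split => // k Kk.
have [k0|k0] := eqVneq k 0; first by rewrite k0 expr0n gtn_eqF //; exact: Fq0.
have [e [Re ee]] := hgen k Kk k0.
have [d [Dd ed]] := Kpart _ e (srX hKs _ Kk) Re ee.
apply: D_F; rewrite ed ec; apply: (srM hD) => //; exact: hf.
Qed.

Lemma API_R_DVR : API_domain Rr -> DVR V.
Proof.
move=> hapi; apply: allprinc_DVR => I hI; have [m0 [Mm0 m00]] := hM0.
case: (classic (exists y, I y /\ y != 0)) => [[x0 [Ix0 x00]]|nz]; last first.
  exists 0; split; first exact: V0.
  move=> x; split.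
    move=> Ix; exists 0; split; first exact: V0.
    by rewrite mulr0; apply: NNPP => /eqP hx; apply: nz; exists x.
  by move=> [c [_ ->]]; rewrite mul0r; exact: (id_0 hI).
pose S y := exists x, I x /\ x != 0 /\ y = m0 * x.
have hS y : S y -> Rr y /\ y != 0.
  move=> [x [Ix [xn0 ->]]]; split; last by rewrite mulf_neq0.
  by apply: M_R; apply: MmulVr => //; apply: (id_sub hI).
have [n [n0 [g [Rg hg]]]] := hapi S hS (ex_intro _ (m0 * x0) (ex_intro _ x0 (conj Ix0 (conj x00 erefl)))).
pose T x := exists s v, S s /\ V v /\ x = s ^+ n * v.
have hT : is_ideal Rr T.
  split.
    move=> x [s [v [Ss [Vv ->]]]]; apply: M_R; apply: MmulVr => //; apply: MX => //.
    by case: Ss => [y [Iy [_ ->]]]; apply: MmulVr => //; apply: (id_sub hI).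
  split; first by exists (m0 * x0), 0; rewrite mulr0; do !split => //; [exists x0|exact: V0].
  split.
    move=> x y [s1 [v1 [S1' [V1' ->]]]] [s2 [v2 [S2 [V2 ->]]]].
    have [r [v [hr [Vv ->]]]] := vtrick (s1 ^+ n) (s2 ^+ n) V1' V2.
    by case: hr => ->; [exists s1, v|exists s2, v].
  move=> r x Rr' [s [v [Ss [Vv ->]]]]; exists s, (r * v); split => //; split; last by ring.
  by apply: VM => //; apply: R_V.
have : T g.
  have hgg : dvd_in Rr g g by exists 1; split; [exact: (sr1 Rs)|rewrite mulr1].
  apply: (proj2 (hg g) hgg T hT).
  by move=> y [s [Ss ->]]; exists s, 1; do !split => //; [exact: V1|rewrite mulr1].
move=> [s0 [v0 [[y0 [Iy0 [y00 es0]]] [Vv0 eg]]]].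
exists y0; split; first exact: (id_sub hI).
move=> x; split; last by move=> [c [Vc ->]]; rewrite mulrC; apply: (id_mul hI).
move=> Ix; have [x0'|x0'] := eqVneq x 0.
  by exists 0; rewrite x0' mulr0; split => //; exact: V0.
have : dvd_in Rr g ((m0 * x) ^+ n).
  by apply/hg; apply: gen_in; exists (m0 * x); split => //; exists x.
move=> [c [Rc ec]].
exists (x / y0); split; last by rewrite mulrC divfK.
apply: (@pow_V _ n) => //; first by rewrite mulf_neq0 // invr_eq0.
have -> : (x / y0) ^+ n = v0 * c.
  apply: (@mulfI _ (s0 ^+ n)); first by rewrite es0 expf_neq0 // mulf_neq0.
  rewrite mulrA -eg -ec es0 -exprMn; congr (_ ^+ _); field; exact: y00.
by apply: VM => //; apply: R_V.
Qed.


Definition unitVw w := V w /\ V w^-1 /\ w != 0.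

Lemma unitV_mul w w' : unitVw w -> unitVw w' -> unitVw (w * w').
Proof.
move=> [V1' [Vi1 n1]] [V2 [Vi2 n2]]; split; first exact: VM.
by split; [rewrite invfM; apply: VM|rewrite mulf_neq0].
Qed.
Lemma unitV_X w n : unitVw w -> unitVw (w ^+ n).
Proof.
move=> [V1' [Vi1 n1]]; split; first exact: VX.
by split; [rewrite -exprVn; apply: VX|rewrite expf_neq0].
Qed.
Lemma unitV_inv w : unitVw w -> unitVw w^-1.
Proof. by move=> [V1' [Vi1 n1]]; split => //; rewrite invrK; split => //; rewrite invr_eq0. Qed.
Lemma unitR_unitV u : unit_in Rr u -> unitVw u.
Proof. by move/unitR_V => [? [? ?]]; split => //; split. Qed.
Lemma unitV_notM w : unitVw w -> ~ M w.
Proof. by move=> [_ [Vi n]]; apply: unit_notM. Qed.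

Section Unif.
Variable a : L.
Hypotheses (aM : M a) (a0 : a != 0)
  (hunif : forall y, Rr y -> y != 0 -> ~ unit_in Rr y ->
    exists m n u, (0 < m)%N /\ (0 < n)%N /\ unit_in Rr u /\ y ^+ m = u * a ^+ n).

Lemma apow_eq A B U U' : unitVw U -> unitVw U' -> U * a ^+ A = U' * a ^+ B -> A = B.
Proof.
have key A' B' W W' : unitVw W -> W * a ^+ A' = W' * a ^+ B' -> V W' -> (A' < B')%N -> False.
  move=> uW e VW' lt; apply: (unitV_notM uW).
  have e' : W = W' * a ^+ (B' - A').
    apply: (@mulIf _ (a ^+ A')); first by rewrite expf_neq0.
    by rewrite e -mulrA -exprD subnK // ltnW.
  by rewrite e'; apply: MmulV => //; apply: MX; rewrite // subn_gt0.
move=> uU uU' e; case: (ltngtP A B) => // lt; exfalso.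
  by apply: (key A B U U') => //; case: uU'.
by apply: (key B A U' U) => //; case: uU.
Qed.

Definition Pdef x (q : rat) := exists m p1 p2 : nat, (0 < m)%N /\
  q = (p1%:R - p2%:R) / m%:R /\ exists w, unitVw w /\ x ^+ m * a ^+ p2 = w * a ^+ p1.

Lemma Pex x : x != 0 -> exists q, Pdef x q.
Proof.
move=> x0; case: (classic (V x)) => Vx.
  case: (classic (M x)) => Mx.
    have nu : ~ unit_in Rr x by move/unitR_notM.
    have [m [n [u [m0 [n0 [uu e]]]]]] := hunif (M_R Mx) x0 nu.
    exists ((n%:R - 0%:R) / m%:R), m, n, 0%N; do !split => //.
    by exists u; split; [exact: unitR_unitV|rewrite expr0 mulr1].
  have [Vi _] := unitV Vx Mx.
  exists ((0%:R - 0%:R) / 1%:R), 1%N, 0%N, 0%N; do !split => //.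
  by exists x; split; [split => //; split|rewrite !expr0 !mulr1 expr1].
have Mi := notV_invM x0 Vx.
have xi0 : x^-1 != 0 by rewrite invr_eq0.
have nu : ~ unit_in Rr x^-1 by move/unitR_notM.
have [m [n [u [m0 [n0 [uu e]]]]]] := hunif (M_R Mi) xi0 nu.
have uV := unitR_unitV uu.
exists ((0%:R - n%:R) / m%:R), m, 0%N, n; do !split => //.
exists u^-1; split; first exact: unitV_inv.
have ex : x ^+ m = (u * a ^+ n)^-1 by rewrite -e exprVn invrK.
case: uV => _ [_ u0].
rewrite expr0 mulr1 ex; field.
by rewrite u0 expf_neq0.
Qed.

Lemma natr_neq0 m : (0 < m)%N -> (m%:R : rat) != 0.
Proof. by move=> h; rewrite pnatr_eq0 -lt0n. Qed.

Lemma Puniq x q q' : Pdef x q -> Pdef x q' -> q = q'.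
Proof.
move=> [m [p1 [p2 [m0 [-> [w [uw e1]]]]]]] [m' [r1 [r2 [m0' [-> [w' [uw' e2]]]]]]].
have hx : (x ^+ m) ^+ m' = (x ^+ m') ^+ m by rewrite -!exprM mulnC.
have L1 : w ^+ m' * a ^+ (p1 * m' + r2 * m) = (x ^+ m * a ^+ p2) ^+ m' * (a ^+ r2) ^+ m.
  by rewrite e1 exprD !exprM exprMn; ring.
have L2 : w' ^+ m * a ^+ (r1 * m + p2 * m') = (x ^+ m' * a ^+ r2) ^+ m * (a ^+ p2) ^+ m'.
  by rewrite e2 exprD !exprM exprMn; ring.
have E : w ^+ m' * a ^+ (p1 * m' + r2 * m) = w' ^+ m * a ^+ (r1 * m + p2 * m').
  by rewrite L1 L2 !exprMn hx; ring.
have hAB := apow_eq (unitV_X m' uw) (unitV_X m uw') E.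
have hQ : ((p1 * m' + r2 * m)%N%:R : rat) = (r1 * m + p2 * m')%N%:R by rewrite hAB.
move: hQ; rewrite !natrD !natrM => hQ.
apply/eqP; rewrite eqr_div ?natr_neq0 //; apply/eqP.
apply/eqP; rewrite -subr_eq0; apply/eqP.
transitivity ((p1%:R * m'%:R + r2%:R * m%:R) - (r1%:R * m%:R + p2%:R * m'%:R) : rat); first by ring.
by rewrite hQ subrr.
Qed.

Lemma Pmul x y q q' : Pdef x q -> Pdef y q' -> Pdef (x * y) (q + q').
Proof.
move=> [m [p1 [p2 [m0 [-> [w [uw e1]]]]]]] [m' [r1 [r2 [m0' [-> [w' [uw' e2]]]]]]].
exists (m * m')%N, (p1 * m' + r1 * m)%N, (p2 * m' + r2 * m)%N; split; first by rewrite muln_gt0 m0.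
split.
  rewrite !natrD !natrM; field.
  by rewrite !natr_neq0.
exists (w ^+ m' * w' ^+ m); split; first by apply: unitV_mul; apply: unitV_X.
have -> : (x * y) ^+ (m * m') * a ^+ (p2 * m' + r2 * m) =
   (x ^+ m * a ^+ p2) ^+ m' * (y ^+ m' * a ^+ r2) ^+ m.
  by rewrite !exprMn -!exprM exprD (mulnC m' m); ring.
rewrite e1 e2 exprD !exprM !exprMn; ring.
Qed.

Lemma Psign z q : z != 0 -> Pdef z q -> (0 <= q <-> V z).
Proof.
move=> z0 [m [p1 [p2 [m0 [-> [w [uw e]]]]]]].
have hm : 0 < (m%:R : rat)^-1 by rewrite invr_gt0 ltr0n.
rewrite pmulr_lge0 // subr_ge0 ler_nat.
case: (leqP p2 p1) => h.
  split => // _; apply: (@pow_V _ m) => //.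
  have -> : z ^+ m = w * a ^+ (p1 - p2).
    apply: (@mulIf _ (a ^+ p2)); first by rewrite expf_neq0.
    by rewrite e -mulrA -exprD subnK.
  by case: uw => Vw _; apply: VM => //; apply: VX; apply: MV.
split => // Vz; exfalso; apply: (unitV_notM uw).
have -> : w = z ^+ m * a ^+ (p2 - p1).
  apply: (@mulIf _ (a ^+ p1)); first by rewrite expf_neq0.
  by rewrite -e -mulrA -exprD subnK // ltnW.
by apply: MmulV; [apply: VX|apply: MX; rewrite // subn_gt0].
Qed.

Lemma RAV_rational : rational_valuation_domain V.
Proof.
split => //.
have hP x : exists q, x != 0 -> Pdef x q.
  case: (eqVneq x 0) => [->|x0]; first by exists 0.
  by have [q hq] := Pex x0; exists q.
pose v x := proj1_sig (constructive_indefinite_description _ (hP x)).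
have vP x : x != 0 -> Pdef x (v x).
  by rewrite /v; case: (constructive_indefinite_description _ _).
exists v; split.
  move=> x y x0 y0; apply: (Puniq (vP _ _)); first by rewrite mulf_neq0.
  by apply: Pmul; apply: vP.
move=> x y x0 y0.
have z0 : y / x != 0 by rewrite mulf_neq0 // invr_eq0.
have ey : v y = v (y / x) + v x.
  rewrite -{1}(divfK x0 y); apply: (Puniq (vP _ _)); first by rewrite divfK.
  by apply: Pmul; apply: vP.
by rewrite ey lerDr; apply: Psign => //; apply: vP.
Qed.

End Unif.

Lemma RAV_to : RAV_domain Rr -> rational_valuation_domain V /\ Dfield /\ root_ext Fq K.
Proof.
move=> [nf [a [Ra ha]]]; have [m0 [Mm0 m00]] := hM0.
have nu0 : ~ unit_in Rr m0 by move/unitR_notM.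
have [m' [n' [u' [m'0 [n'0 [uu' e']]]]]] := ha m0 (M_R Mm0) m00 nu0.
have a0 : a != 0.
  apply/eqP => a0; move: e'; rewrite a0 expr0n gtn_eqF // mulr0 => /eqP.
  by rewrite expf_eq0 (negbTE m00) andbF.
have aM : M a.
  apply: NNPP => naM; have [Vai _] := unitV (R_V Ra) naM.
  have [_ [Vui u0]] := unitR_V uu'.
  apply: (unit_notM m00 _ Mm0); apply: (@pow_V _ m') => //; first by rewrite invr_eq0.
  by rewrite exprVn e' invfM -exprVn; apply: VM => //; apply: VX.
have hunif : forall y, Rr y -> y != 0 -> ~ unit_in Rr y ->
    exists m n u, (0 < m)%N /\ (0 < n)%N /\ unit_in Rr u /\ y ^+ m = u * a ^+ n.
  exact: ha.
have hf : Dfield.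
  move=> d Dd d0; case: (classic (unit_in Rr d)) => [[_ [y [Ry e]]]|nu].
    have -> : d^-1 = y by rewrite -(mulKf d0 y) e mulr1.
    by apply: RK_D => //; rewrite -(mulKf d0 y) e mulr1; apply: Kinv => //; apply: hDK.
  have [m [n [u [m0' [n0 [uu e]]]]]] := hunif d (D_R Dd) d0 nu.
  exfalso; apply: (@KnotM (d ^+ m)); first by apply: (srX hKs); apply: hDK.
    by rewrite expf_neq0.
  by rewrite e; apply: MmulV; [apply: R_V; case: uu|apply: MX].
split; first exact: (RAV_rational aM a0 hunif).
split => // k Kk.
have [k0|k0] := eqVneq k 0; first by exists 1%N; split => //; rewrite k0 expr1; exact: Fq0.
have y0 : k * m0 != 0 by rewrite mulf_neq0.
have My : M (k * m0) by apply: MmulV => //; apply: hKV.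
have nuy : ~ unit_in Rr (k * m0) by move/unitR_notM.
have [m [n [u [m0' [n0 [uu e]]]]]] := hunif _ (M_R My) y0 nuy.
have [u'i [Ru'i eu']] : exists z, Rr z /\ u' * z = 1 by case: uu' => _ [z [Rz ez]]; exists z.
have [_ [_ u'0]] := unitR_V uu'.
have eu'i : u'^-1 = u'i by rewrite -(mulKf u'0 u'i) eu' mulr1.
pose W := u ^+ n' * u'i ^+ n.
have RW : Rr W by apply: (srM Rs); apply: (srX Rs) => //; case: uu.
have uW : unitVw W.
  apply: unitV_mul; apply: unitV_X; first exact: unitR_unitV.
  rewrite -eu'i; apply: unitV_inv; exact: unitR_unitV.
have E : k ^+ (m * n') * m0 ^+ (m * n') = W * m0 ^+ (m' * n).
  have E1 : (k * m0) ^+ (m * n') = u ^+ n' * a ^+ (n * n') by rewrite exprM e exprMn -exprM.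
  have E2 : m0 ^+ (m' * n) = u' ^+ n * a ^+ (n * n') by rewrite exprM e' exprMn -exprM mulnC.
  rewrite -exprMn E1 E2 /W -eu'i exprVn; field.
  by rewrite expf_neq0.
clearbody W.
have Kkp : K (k ^+ (m * n')) by apply: (srX hKs).
have kp0 : k ^+ (m * n') != 0 by rewrite expf_neq0.
exists (m * n')%N; split; first by rewrite muln_gt0 m0'.
case: (ltngtP (m * n') (m' * n)) => h.
- exfalso; apply: (KnotM Kkp kp0).
  have -> : k ^+ (m * n') = W * m0 ^+ (m' * n - m * n').
    apply: (@mulIf _ (m0 ^+ (m * n'))); first by rewrite expf_neq0.
    by rewrite E -mulrA -exprD subnK // ltnW.
  by apply: MmulV; [case: uW|apply: MX; rewrite // subn_gt0].
- exfalso; apply: (unitV_notM uW).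
  have -> : W = k ^+ (m * n') * m0 ^+ (m * n' - m' * n).
    apply: (@mulIf _ (m0 ^+ (m' * n))); first by rewrite expf_neq0.
    by rewrite -E -mulrA -exprD subnK // ltnW.
  by apply: MmulV; [apply: hKV|apply: MX; rewrite // subn_gt0].
apply: D_F; apply: RK_D => //.
have -> : k ^+ (m * n') = W.
  by apply: (@mulIf _ (m0 ^+ (m * n'))); [rewrite expf_neq0|rewrite E h].
exact: RW.
Qed.


Lemma RAV_of : rational_valuation_domain V -> Dfield -> root_ext Fq K -> RAV_domain Rr.
Proof.
move=> [_ [v [vadd vle]]] hf hr; have [m0 [Mm0 m00]] := hM0.
split.
  by move=> hfR; have := hfR m0 (M_R Mm0) m00; move/unitR_notM; apply.
exists m0; split; first exact: M_R.
move=> y Ry y0 nu.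
have My : M y by apply: NNPP => nM; apply: nu; apply: R_notM_unit.
have v1 : v 1 = 0.
  have h := vadd 1 1 (oner_neq0 _) (oner_neq0 _); rewrite mulr1 in h.
  by apply: (addrI (v 1)); rewrite addr0 -h.
have vpos x : M x -> x != 0 -> 0 < v x.
  move=> Mx x0; rewrite ltNge; apply/negP => h; rewrite -v1 in h.
  have := (proj1 (vle x 1 x0 (oner_neq0 _))) h; rewrite div1r => Vi.
  exact: (unit_notM x0 Vi Mx).
have vpow x n : x != 0 -> v (x ^+ n) = n%:R * v x.
  move=> x0; elim: n => [|n IH]; first by rewrite expr0 v1 mul0r.
  by rewrite exprS vadd ?expf_neq0 // IH mulrS mulrDl mul1r.
have p0 := vpos y My y0; have q0 := vpos m0 Mm0 m00.
pose r := v m0 / v y.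
have r0 : 0 < r by rewrite divr_gt0.
have [m em] : exists m : nat, numq r = m%:Z.
  by case E: (numq r) => [m|m]; [exists m|move: r0; rewrite -numq_gt0 E].
have [n en] : exists n : nat, denq r = n%:Z.
  by case E: (denq r) => [n|n]; [exists n|move: (denq_gt0 r); rewrite E].
have m0' : (0 < m)%N by rewrite -(ltz_nat 0) -em numq_gt0.
have n0' : (0 < n)%N by rewrite -(ltz_nat 0) -en denq_gt0.
have hmn : m%:R * v y = n%:R * v m0.
  have h : (m%:R / n%:R : rat) = v m0 / v y by rewrite -[RHS]/r -(divq_num_den r) em en.
  move/eqP: h; rewrite eqr_div ?natr_neq0 //; last by rewrite gt_eqF.
  by move/eqP => ->; rewrite mulrC.
have ym0 : y ^+ m != 0 by rewrite expf_neq0.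
have mn0 : m0 ^+ n != 0 by rewrite expf_neq0.
have evv : v (y ^+ m) = v (m0 ^+ n) by rewrite !vpow.
pose w := y ^+ m / m0 ^+ n.
have Vw : V w by apply/(vle _ _ mn0 ym0); rewrite evv.
have Vwi : V w^-1 by rewrite /w invf_div; apply/(vle _ _ ym0 mn0); rewrite evv.
have w0 : w != 0 by rewrite mulf_neq0 // invr_eq0.
have nMw : ~ M w by apply: unit_notM.
have [k [mm [Kk [Mmm ew]]]] := hVKM Vw.
have k0 : k != 0 by apply/eqP => k0; apply: nMw; rewrite ew k0 add0r.
have [p [pp Fkp]] := hr k Kk.
have Rwp : Rr (w ^+ p).
  exists (k ^+ p), (w ^+ p - k ^+ p); split; first exact/(same_Dfield hf).
  split; last by ring.
  by apply: KpowM => //; rewrite ew addrC addKr.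
have uwp : unit_in Rr (w ^+ p).
  apply: R_notM_unit => //; apply: unit_notM; first by rewrite expf_neq0.
  by rewrite -exprVn; apply: VX.
exists (m * p)%N, (n * p)%N, (w ^+ p); split; first by rewrite muln_gt0 m0'.
split; first by rewrite muln_gt0 n0'.
split => //.
by rewrite !exprM -exprMn /w divfK.
Qed.

Lemma main_equiv :
  ((local Rr /\ AV_domain Rr) <->
     (DVR V /\ same_set D Fq /\ finite_degree Fq K /\ root_ext Fq K)) /\
  ((quasilocal Rr /\ API_domain Rr) <->
     (DVR V /\ same_set D Fq /\ bounded_root_ext Fq K)) /\
  ((local Rr /\ API_domain Rr) <->
     (DVR V /\ same_set D Fq /\ finite_degree Fq K /\ bounded_root_ext Fq K)) /\
  (RAV_domain Rr <->
     (rational_valuation_domain V /\ same_set D Fq /\ root_ext Fq K)).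
Proof.
split.
  split.
    move=> [[hn hq] hav]; have hf := noethR_Dfield hn.
    split; first exact: noethV_DVR (noethR_noethV hn).
    split; first exact: same_Dfield hf.
    split; first exact: noethR_finite hn.
    exact: AV_root hav hf.
  move=> [hdvr [hs [hfin hr]]]; have hf := Dfield_same hs.
  split; first by split; [exact: noethR_of hdvr hf hfin|exact: quasilocalR hf].
  exact: AV_of hf hr.
split.
  split.
    move=> [_ hapi]; have hf := API_R_Dfield hapi.
    split; first exact: API_R_DVR hapi.
    split; first exact: same_Dfield hf.
    exact: API_R_bounded hapi hf.
  move=> [hdvr [hs hb]]; have hf := Dfield_same hs.
  split; first exact: quasilocalR hf.
  exact: API_of hdvr hf hb.
split.
  split.
    move=> [[hn _] hapi]; have hf := API_R_Dfield hapi.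
    split; first exact: API_R_DVR hapi.
    split; first exact: same_Dfield hf.
    split; first exact: noethR_finite hn.
    exact: API_R_bounded hapi hf.
  move=> [hdvr [hs [hfin hb]]]; have hf := Dfield_same hs.
  split; first by split; [exact: noethR_of hdvr hf hfin|exact: quasilocalR hf].
  exact: API_of hdvr hf hb.
split.
  move/RAV_to => [hrv [hf hr]]; split => //; split => //; exact: same_Dfield hf.
move=> [hrv [hs hr]]; exact: RAV_of hrv (Dfield_same hs) hr.
Qed.

End Main.

Theorem theorem13 (L : fieldType) (V M K D : L -> Prop)
  (hVval : valuation_domain V)
  (hL : forall x : L, exists a b, V a /\ V b /\ b != 0 /\ x = a / b)
  (hM : maximal_ideal V M)
  (hM0 : exists m, M m /\ m != 0)
  (hK : subfield K) (hKV : forall x, K x -> V x)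
  (hVKM : forall v, V v -> exists k m, K k /\ M m /\ v = k + m)
  (hD : subring D) (hDK : forall x, D x -> K x) :
  let R := fun x => exists d m, D d /\ M m /\ x = d + m in
  let F := fun x => exists a b, D a /\ D b /\ b != 0 /\ x = a / b in
  (* (10) *)
  ((local R /\ AV_domain R) <->
     (DVR V /\ same_set D F /\ finite_degree F K /\ root_ext F K)) /\
  (* (11) *)
  ((quasilocal R /\ API_domain R) <->
     (DVR V /\ same_set D F /\ bounded_root_ext F K)) /\
  (* (12) *)
  ((local R /\ API_domain R) <->
     (DVR V /\ same_set D F /\ finite_degree F K /\ bounded_root_ext F K)) /\
  (* (13) *)
  (RAV_domain R <->
     (rational_valuation_domain V /\ same_set D F /\ root_ext F K)).
Proof.
move=> R F.
exact: (main_equiv hVval hM hM0 hK hKV hVKM hD hDK).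
Qed.
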